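(* Suppose that \begin{itemize} \item $X$ is geodetic; and \item either \begin{itemize} \item $X$ is Menger convex and has no 4-cuts, or \item $X$ is geodesic. \end{itemize} \end{itemize} Then $\mathit{HM}_2(X)=0$.
   Context: Let $X$ be a metric space. Write $y$ is between $x$ and $z$ if $d(x,y)+d(y,z)=d(x,z)$, and strictly between if moreover $x\neq y\neq z$. $X$ is Menger convex if for any two distinct points there is a point strictly between them. $X$ has no 4-cuts if whenever $y_1\neq y_2$, $d(x,y_1)+d(y_1,y_2)=d(x,y_2)$ and $d(y_1,y_2)+d(y_2,z)=d(y_1,z)$ imply $d(x,z)=d(x,y_1)+d(y_1,y_2)+d(y_2,z)$. $X$ is geodesic if for any $x,y$ there is an isometry $\gamma:[0,a]\to X$ with $\gamma(0)=x$, $\gamma(a)=y$. $X$ is geodetic if for any distinct $x,z$, whenever $y_1$ and $y_2$ are both between $x$ and $z$, either ($y_1$ is between $x$ and $y_2$ and $y_2$ is between $y_1$ and $z$) or ($y_2$ is between $x$ and $y_1$ and $y_1$ is between $y_2$ and $z$). The magnitude homology $\mathit{HM}^\ell_n(X)$ is the degree-$n$ homology of the chain complex whose $n$-chains in grading $\ell$ are the free abelian group on symbols $\langle x_0,\dots,x_n\rangle$ with $x_i\neq x_{i+1}$ and $d(x_0,x_1)+\cdots+d(x_{n-1},x_n)=\ell$, with boundary $\sum_i(-1)^i d^i$, where $d^i$ deletes $x_i$ if $x_i$ is between $x_{i-1}$ and $x_{i+1}$ and is $0$ otherwise (deleting an endpoint always gives $0$); $\mathit{HM}_2(X)=0$ means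 vanishing in all gradings. *)

(* Defs.v *)
From Stdlib Require Import Reals List ZArith ClassicalEpsilon.
Import ListNotations.
Open Scope R_scope.

Section Metric.
Context {X : Type} (d : X -> X -> R).

Definition is_metric : Prop :=
  (forall x y, d x y = 0 <-> x = y) /\
  (forall x y, d x y = d y x) /\
  (forall x y z, d x z <= d x y + d y z).

Definition between (x y z : X) : Prop := d x y + d y z = d x z.

Definition strictly_between (x y z : X) : Prop :=
  between x y z /\ x <> y /\ y <> z.

Definition menger_convex : Prop :=
  forall x z, x <> z -> exists y, strictly_between x y z.

Definition no_4_cuts : Prop :=
  forall x y1 y2 z, y1 <> y2 ->
    d x y1 + d y1 y2 = d x y2 ->
    d y1 y2 + d y2 z = d y1 z ->
    d x z = d x y1 + d y1 y2 + d y2 z.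

Definition geodesic : Prop :=
  forall x y, exists (a : R) (g : R -> X),
    0 <= a /\ g 0 = x /\ g a = y /\
    forall s t, 0 <= s <= a -> 0 <= t <= a -> d (g s) (g t) = Rabs (s - t).

Definition geodetic : Prop :=
  forall x z y1 y2, x <> z -> between x y1 z -> between x y2 z ->
    (between x y1 y2 /\ between y1 y2 z) \/
    (between x y2 y1 /\ between y2 y1 z).

(** Generators: tuples <x_0,...,x_n> represented as lists. *)
Fixpoint consec_distinct (xs : list X) : Prop :=
  match xs with
  | x :: ((y :: _) as tl) => x <> y /\ consec_distinct tl
  | _ => True
  end.

Fixpoint path_length (xs : list X) : R :=
  match xs with
  | x :: ((y :: _) as tl) => d x y + path_length tl
  | _ => 0
  end.

Definition is_gen (n : nat) (l : R) (xs : list X) : Prop :=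
  length xs = S n /\ consec_distinct xs /\ path_length xs = l.

(** Chains: finite formal Z-linear combinations of tuples. *)
Definition chain := list (Z * list X).

Definition coef (c : chain) (t : list X) : Z :=
  fold_right (fun e acc =>
    if excluded_middle_informative (snd e = t) then (fst e + acc)%Z else acc)
    0%Z c.

Fixpoint remove_nth (i : nat) (xs : list X) : list X :=
  match i, xs with
  | _, [] => []
  | O, _ :: tl => tl
  | S i', x :: tl => x :: remove_nth i' tl
  end.

(** The face map d^i: deletes x_i if it is between x_{i-1} and x_{i+1},
    zero otherwise (in particular for the endpoints i = 0, i = n). *)
Definition face (i : nat) (xs : list X) : option (list X) :=
  match i with
  | O => None
  | S i' =>
    match nth_error xs i', nth_error xs i, nth_error xs (S i) with
    | Some a, Some b, Some c =>
        if Req_EM_T (d a b + d b c) (d a c) then Some (remove_nth i xs) else None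
    | _, _, _ => None
    end
  end.

Definition sign (i : nat) : Z := if Nat.even i then 1%Z else (-1)%Z.

Definition bd_gen (k : Z) (xs : list X) : chain :=
  flat_map (fun i =>
    match face i xs with
    | Some ys => [((sign i * k)%Z, ys)]
    | None => []
    end) (seq 0 (length xs)).

Definition bd (c : chain) : chain :=
  flat_map (fun e => bd_gen (fst e) (snd e)) c.

Definition chain_in (n : nat) (l : R) (c : chain) : Prop :=
  forall e, In e c -> is_gen n l (snd e).

Definition HM_vanishes_at (n : nat) (l : R) : Prop :=
  forall c : chain, chain_in n l c ->
    (forall t, coef (bd c) t = 0%Z) ->
    exists b : chain, chain_in (S n) l b /\
      (forall t, coef (bd b) t = coef c t).

Definition HM_vanishes (n : nat) : Prop := forall l : R, HM_vanishes_at n l.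

End Metric.

(* Main.v *)
Require Import Defs.
From Stdlib Require Import Reals Lra List ZArith ClassicalEpsilon Classical Lia.
Import ListNotations.
Open Scope R_scope.

Lemma coef_cons (X : Type) (e : Z * list X) c t :
  coef (e :: c) t = (coef [e] t + coef c t)%Z.
Proof. unfold coef; simpl. destruct (excluded_middle_informative (snd e = t)); lia. Qed.

Lemma coef_app (X : Type) (l1 l2 : chain) (t : list X) :
  coef (l1 ++ l2) t = (coef l1 t + coef l2 t)%Z.
Proof.
  induction l1 as [|e l1 IH]. simpl. reflexivity.
  rewrite <- app_comm_cons, coef_cons, IH, (coef_cons _ e l1). lia.
Qed.

Definition sumZ {A : Type} (g : A -> Z) (l : list A) : Z :=
  fold_right (fun a acc => (g a + acc)%Z) 0%Z l.

Lemma coef_flat_map (X A : Type) (f : A -> @chain X) l t :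
  coef (flat_map f l) t = sumZ (fun a => coef (f a) t) l.
Proof.
  induction l as [|a l IH]. reflexivity.
  cbn [flat_map]. rewrite coef_app, IH. reflexivity.
Qed.

Lemma coef_as_sum (X : Type) (c : @chain X) t :
  coef c t = sumZ (fun e => coef [e] t) c.
Proof.
  induction c as [|e c IH]. reflexivity.
  rewrite coef_cons, IH. reflexivity.
Qed.

Lemma sumZ_ext (A : Type) (g h : A -> Z) l :
  (forall a, In a l -> g a = h a) -> sumZ g l = sumZ h l.
Proof.
  induction l as [|a l IH]; simpl; intros H. reflexivity.
  rewrite H by auto. rewrite IH by auto. reflexivity.
Qed.

Lemma sumZ_minus (A : Type) (g h : A -> Z) l :
  sumZ (fun a => (g a - h a)%Z) l = (sumZ g l - sumZ h l)%Z.
Proof. induction l; simpl; lia. Qed.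

Lemma sumZ_opp (A : Type) (g : A -> Z) l :
  sumZ (fun a => (- g a)%Z) l = (- sumZ g l)%Z.
Proof. induction l; simpl; lia. Qed.

Lemma sumZ_zero (A : Type) (l : list A) : sumZ (fun _ => 0%Z) l = 0%Z.
Proof. induction l; simpl; lia. Qed.

Lemma bd_flat_map (X A : Type) (d : X -> X -> R) (f : A -> chain) l :
  bd d (flat_map f l) = flat_map (fun a => bd d (f a)) l.
Proof.
  induction l as [|a l IH]. reflexivity.
  cbn [flat_map]. unfold bd in *. rewrite flat_map_app, IH. reflexivity.
Qed.

Lemma d_nonneg (X : Type) (d : X -> X -> R) : is_metric d -> forall x y, 0 <= d x y.
Proof.
  intros [H1 [H2 H3]] x y. specialize (H3 x y x). rewrite (H2 y x) in H3.
  assert (d x x = 0) by (apply H1; reflexivity). lra.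
Qed.

Lemma d_pos (X : Type) (d : X -> X -> R) : is_metric d -> forall x y, x <> y -> 0 < d x y.
Proof.
  intros Hm x y Hxy. pose proof (d_nonneg _ _ Hm x y).
  destruct Hm as [H1 _]. destruct (Req_dec (d x y) 0) as [E|E].
  - apply H1 in E. contradiction.
  - lra.
Qed.
Lemma bd4_TT (X:Type) (d : X -> X -> R) k (a b c e : X) :
  Defs.between d a b c -> Defs.between d b c e ->
  Defs.bd d [(k,[a;b;c;e])] = [((-k)%Z,[a;c;e]); (k,[a;b;e])].
Proof.
  unfold Defs.between; intros H1 H2. unfold Defs.bd, bd_gen. simpl.
  destruct (Req_dec_T _ _); [|contradiction].
  destruct (Req_dec_T _ _); [|contradiction].
  destruct k; reflexivity.
Qed.
Lemma bd4_TF (X:Type) (d : X -> X -> R) k (a b c e : X) :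
  Defs.between d a b c -> ~ Defs.between d b c e ->
  Defs.bd d [(k,[a;b;c;e])] = [((-k)%Z,[a;c;e])].
Proof.
  unfold Defs.between; intros H1 H2. unfold Defs.bd, bd_gen. simpl.
  destruct (Req_dec_T _ _); [|contradiction].
  destruct (Req_dec_T _ _); [contradiction|].
  destruct k; reflexivity.
Qed.
Lemma bd3 (X:Type) (d : X -> X -> R) k (a b c : X) :
  bd_gen d k [a;b;c] = if excluded_middle_informative (Defs.between d a b c) then [((-k)%Z,[a;c])] else [].
Proof.
  unfold bd_gen. simpl.
  destruct (excluded_middle_informative _) as [H|H]; unfold Defs.between in H;
  destruct (Req_dec_T _ _); try contradiction.
  destruct k; reflexivity. reflexivity.
Qed.

Definition rpt {X} (d : X -> X -> R) (a c : X) : X :=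
  epsilon (inhabits a) (fun y => strictly_between d a y c).
Definition mpt {X} (d : X -> X -> R) (a b c : X) : X :=
  epsilon (inhabits a) (fun m => strictly_between d a m b /\ ~ Defs.between d m b c).

Definition fstep {X} (d : X -> X -> R) (e : Z * list X) : chain :=
  match e with
  | (k, [x0;x1;x2]) =>
    if excluded_middle_informative (Defs.between d x0 x1 x2) then
      if excluded_middle_informative (x1 = rpt d x0 x2) then []
      else if excluded_middle_informative
         (Defs.between d x0 x1 (rpt d x0 x2) /\ Defs.between d x1 (rpt d x0 x2) x2)
      then [(k, [x0;x1;rpt d x0 x2;x2])]
      else [((-k)%Z, [x0; rpt d x0 x2; x1; x2])]
    else [((-k)%Z, [x0; mpt d x0 x1 x2; x1; x2])]
  | _ => []
  end.

Definition corr {X} (d : X -> X -> R) (e : Z * list X) (t : list X) : Z :=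
  match e with
  | (k, [x0;x1;x2]) =>
    if excluded_middle_informative (Defs.between d x0 x1 x2) then
      if excluded_middle_informative ([x0; rpt d x0 x2; x2] = t) then k else 0%Z
    else 0%Z
  | _ => 0%Z end.

Ltac coef_solve :=
  repeat (destruct (excluded_middle_informative _)); unfold coef; simpl;
  repeat (destruct (excluded_middle_informative _)); subst; try congruence; lia.

Lemma step_ok (X : Type) (d : X -> X -> R) l (e : Z * list X) t :
  is_metric d -> geodetic d ->
  (forall a b c, a<>b -> b<>c -> ~ Defs.between d a b c ->
     exists m, strictly_between d a m b /\ ~ Defs.between d m b c) ->
  is_gen d 2 l (snd e) ->
  coef (Defs.bd d (fstep d e)) t = (coef [e] t - corr d e t)%Z /\
  chain_in d 3 l (fstep d e).
Proof.
  intros Hm Hg Hmid [Hlen [Hcd Hpl]].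
  destruct e as [k xs].
  destruct xs as [|x0 [|x1 [|x2 [|]]]]; simpl in Hlen; try discriminate.
  simpl in Hcd, Hpl. destruct Hcd as [H01 [H12 _]].
  unfold fstep, corr.
  destruct (excluded_middle_informative (Defs.between d x0 x1 x2)) as [B|NB].
  - assert (H02 : x0 <> x2).
    { intro E. subst x2. unfold Defs.between in B.
      pose proof (d_pos _ _ Hm _ _ H01). pose proof (d_pos _ _ Hm _ _ H12).
      destruct Hm as [H1 _]. assert (d x0 x0 = 0) by (apply H1; reflexivity). lra. }
    assert (Hr : strictly_between d x0 (rpt d x0 x2) x2).
    { unfold rpt. apply epsilon_spec. exists x1. split; auto. }
    set (r := rpt d x0 x2) in *.
    destruct Hr as [Br [H0r Hr2]].
    destruct (excluded_middle_informative (x1 = r)) as [E|NE].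
    + split.
      * rewrite <- E. coef_solve.
      * intros e [].
    + destruct (excluded_middle_informative
         (Defs.between d x0 x1 r /\ Defs.between d x1 r x2)) as [[B1 B2]|NB2].
      * rewrite bd4_TT by assumption. split.
        -- coef_solve.
        -- intros e [<-|[]]. unfold is_gen; simpl. split; [reflexivity|].
           split; [tauto|]. unfold Defs.between in *. lra.
      * destruct (Hg x0 x2 x1 r H02 B Br) as [HH|[B1 B2]]; [contradiction|].
        rewrite bd4_TT by assumption. split.
        -- coef_solve.
        -- intros e [<-|[]]. unfold is_gen; simpl. split; [reflexivity|].
           split; [split; [auto|split; [intro; apply NE; symmetry; auto|auto]]|]. unfold Defs.between in *. lra.
  - destruct (Hmid x0 x1 x2 H01 H12 NB) as [m0 Hm0].
    assert (Hm1 : strictly_between d x0 (mpt d x0 x1 x2) x1 /\ ~ Defs.between d (mpt d x0 x1 x2) x1 x2).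
    { unfold mpt. apply epsilon_spec. exists m0. exact Hm0. }
    set (m := mpt d x0 x1 x2) in *.
    destruct Hm1 as [[Bm [H0m Hm1']] NBm].
    rewrite bd4_TF by assumption. split.
    + coef_solve.
    + intros e [<-|[]]. unfold is_gen; simpl. split; [reflexivity|].
      split; [tauto|]. unfold Defs.between in *. lra.
Qed.

Lemma corr_sum (X : Type) (d : X -> X -> R) l (c : @chain X) t :
  chain_in d 2 l c -> (forall s, coef (Defs.bd d c) s = 0%Z) ->
  sumZ (fun e => corr d e t) c = 0%Z.
Proof.
  intros Hc Hcyc.
  destruct (classic (exists a c', t = [a; rpt d a c'; c'])) as [[a [c' ->]]|Hn].
  - transitivity (sumZ (fun e => - coef (bd_gen d (fst e) (snd e)) [a;c'])%Z c).
    + apply sumZ_ext. intros [k xs] He. apply Hc in He. destruct He as [Hlen _].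
      destruct xs as [|x0 [|x1 [|x2 [|]]]]; simpl in Hlen; try discriminate.
      simpl fst; simpl snd. rewrite bd3. unfold corr.
      coef_solve.
    + rewrite sumZ_opp. pose proof (Hcyc [a;c']) as H0. unfold Defs.bd in H0.
      rewrite coef_flat_map in H0. rewrite H0. reflexivity.
  - rewrite <- (sumZ_zero _ c). apply sumZ_ext. intros [k xs] He.
    apply Hc in He. destruct He as [Hlen _].
    destruct xs as [|x0 [|x1 [|x2 [|]]]]; simpl in Hlen; try discriminate.
    unfold corr.
    repeat (destruct (excluded_middle_informative _)); try reflexivity.
    exfalso. apply Hn. exists x0, x2. symmetry. assumption.
Qed.

Lemma mid_exists (X : Type) (d : X -> X -> R) :
  is_metric d -> ((menger_convex d /\ no_4_cuts d) \/ geodesic d) ->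
  forall a b c, a<>b -> b<>c -> ~ Defs.between d a b c ->
  exists m, strictly_between d a m b /\ ~ Defs.between d m b c.
Proof.
  intros Hm Hor a b c Hab Hbc Hnb.
  destruct Hor as [[Hmc H4]|Hgeo].
  - destruct (Hmc a b Hab) as [m [Bm [Ham Hmb]]]. exists m. split.
    + split; auto.
    + intro Hb. apply Hnb. unfold Defs.between in *.
      pose proof (H4 a m b c Hmb Bm Hb). lra.
  - destruct (Hgeo a b) as [al [g [Hal [Hg0 [Hga Hiso]]]]].
    pose proof Hm as [H1 [H2 H3]].
    assert (Hd : d a b = al).
    { rewrite <- Hg0, <- Hga, Hiso by lra. rewrite Rabs_left1 by lra. lra. }
    pose proof (d_pos _ _ Hm _ _ Hab) as Hpos.
    pose proof (H3 a b c) as Htri.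
    unfold Defs.between in Hnb.
    set (e := d a b + d b c - d a c).
    assert (He : 0 < e) by (unfold e; lra).
    set (t := Rmin (e/3) (al/2)).
    assert (Ht1 : t <= e/3) by apply Rmin_l.
    assert (Ht2 : t <= al/2) by apply Rmin_r.
    assert (Ht0 : 0 < t) by (apply Rmin_glb_lt; lra).
    assert (Dam : d a (g t) = t).
    { rewrite <- Hg0, Hiso by lra. rewrite Rabs_left by lra. lra. }
    assert (Dmb : d (g t) b = al - t).
    { rewrite <- Hga, Hiso by lra. rewrite Rabs_left by lra. lra. }
    exists (g t). split; [split; [|split]|].
    + unfold Defs.between. lra.
    + intro E. rewrite <- E in Dam. assert (d a a = 0) by (apply H1; reflexivity). lra.
    + intro E. rewrite E in Dmb. assert (d b b = 0) by (apply H1; reflexivity). lra.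
    + unfold Defs.between. intro Hb.
      pose proof (H3 (g t) a c) as T2. rewrite (H2 (g t) a) in T2.
      unfold e in *. lra.
Qed.

Theorem theorem7p22 (X : Type) (d : X -> X -> R) :
  is_metric d ->
  geodetic d ->
  ((menger_convex d /\ no_4_cuts d) \/ geodesic d) ->
  HM_vanishes d 2.
Proof.
  intros Hm Hg Hor l c Hc Hcyc.
  pose proof (mid_exists X d Hm Hor) as Hmid.
  exists (flat_map (fstep d) c). split.
  - intros e He. apply in_flat_map in He. destruct He as [e0 [He0 He]].
    exact (proj2 (step_ok X d l e0 nil Hm Hg Hmid (Hc e0 He0)) e He).
  - intros t. rewrite bd_flat_map, coef_flat_map, (coef_as_sum _ c).
    transitivity (sumZ (fun e => (coef [e] t - corr d e t)%Z) c).
    + apply sumZ_ext. intros e He. exact (proj1 (step_ok X d l e t Hm Hg Hmid (Hc e He))).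
    + rewrite sumZ_minus, (corr_sum X d l c t Hc Hcyc). lia.
Qed.
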